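(* Let $G$ be a graph and let $p\geq 2$ be an integer. Then $\mathrm{id}^{\leq p}(G) \leq \left\lceil\frac{|E(G)|}{\lfloor p/2\rfloor}\right\rceil + \frac{1}{2}p^2$.
   Context: All graphs are finite and simple. For an oriented graph $D$ and a set $X\subseteq V(D)$, the inversion of $X$ reverses the orientation of every arc with both endvertices in $X$. For an integer $p\ge 2$, a $(\leq p)$-inversion is the inversion of a set of at most $p$ vertices. For a graph $G$, $\mathrm{id}^{\leq p}(G)$ (the $(\leq p)$-inversion diameter) is the maximum, over all ordered pairs $(\vec G_1,\vec G_2)$ of orientations of $G$ (on the same labelled vertex set), of the minimum number of $(\leq p)$-inversions whose successive application transforms $\vec G_1$ into $\vec G_2$; equivalently it is the diameter of the graph whose vertices are the orientations of $G$, two being adjacent iff one $(\leq p)$-inversion transforms one into the other. *)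

(* Defs.v *)
From mathcomp Require Import all_boot all_order.
Set Implicit Arguments. Unset Strict Implicit. Unset Printing Implicit Defensive.

Definition simple_graph (T : finType) (e : rel T) : Prop :=
  symmetric e /\ irreflexive e.

Definition edges (T : finType) (e : rel T) : {set {set T}} :=
  [set [set x.1; x.2] | x in [set x : T * T | e x.1 x.2]].

(* An orientation of G: a relation [o] (o u v means the arc u -> v) such that
   every arc is an edge of G and each edge uv receives exactly one direction. *)
Definition orientation (T : finType) (e : rel T) (o : rel T) : Prop :=
  (forall u v, o u v -> e u v) /\ (forall u v, e u v -> o u v != o v u).

Definition invert (T : finType) (X : {set T}) (o : rel T) : rel T :=
  fun u v => if (u \in X) && (v \in X) then o v u else o u v.

Definition apply_inversions (T : finType) (s : seq {set T}) (o : rel T) : rel T :=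
  foldl (fun o' X => invert X o') o s.

Definition le_p_inversion_seq (T : finType) (p : nat) (s : seq {set T})
    (o1 o2 : rel T) : Prop :=
  all (fun X : {set T} => #|X| <= p) s /\
  (forall u v, apply_inversions s o1 u v = o2 u v).

(* ceiling of a / b for b >= 1 *)
Definition ceildiv (a b : nat) : nat := (a + b - 1) %/ b.

(* Main.v *)
Require Import Defs.
From mathcomp Require Import all_boot all_order zify.
Set Implicit Arguments. Unset Strict Implicit. Unset Printing Implicit Defensive.

Lemma exists_sub_card (U : finType) (A : {set U}) n :
  n <= #|A| -> exists S : {set U}, S \subset A /\ #|S| = n.
Proof.
elim: n => [|n IH] H; first by exists set0; rewrite sub0set cards0.
have [S [SA cS]] := IH (ltnW H).
have : ~~ (A \subset S).
  apply/negP => AS; have := subset_leq_card AS; lia.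
case/subsetPn => x xA xS.
exists (x |: S); rewrite subUset sub1set xA SA cardsU1 xS cS; split => //.
Qed.

Lemma card_bigcup_le (I U : finType) (P : {set I}) (F : I -> {set U}) :
  #|\bigcup_(i in P) F i| <= \sum_(i in P) #|F i|.
Proof.
apply: (big_ind2 (fun (X : {set U}) (y : nat) => #|X| <= y)).
- by rewrite cards0.
- move=> X1 y1 X2 y2 h1 h2; apply: leq_trans (leq_card_setU _ _) _.
  exact: leq_add.
- by [].
Qed.

Lemma chunk (U : finType) (q : nat) (A : {set U}) : 0 < q ->
  exists ss : seq {set U},
    (forall S, S \in ss -> S \subset A /\ #|S| <= q) /\
    (forall x : U, count (fun S : {set U} => x \in S) ss = (x \in A)) /\
    size ss * q <= #|A| + q - 1.
Proof.
move=> q0; move Hn: #|A| => n; elim: n {-2}n (leqnn n) A Hn => [|N IH] n Hn A HA.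
  exists [::]; split => //; split => //= x.
  move: HA; have -> : n = 0 by lia. by move/eqP; rewrite cards_eq0 => /eqP ->; rewrite inE.
case: (leqP n q) => nq.
  case: (boolP (A == set0)) => [/eqP A0|An0].
    exists [::]; split => //; split => //= x; by rewrite A0 inE.
  exists [:: A]; split; first by move=> S; rewrite inE => /eqP ->; split => //; lia.
  split; first by move=> x /=; rewrite addn0.
  have := card_gt0 A; rewrite An0 /=. simpl. lia.
have [S [SA cS]] := exists_sub_card (A := A) (n := q) ltac:(lia).
have [ss [H1 [H2 H3]]] := IH (#|A :\: S|) ltac:(rewrite cardsDS //; lia) (A :\: S) erefl.
exists (S :: ss); split.
  move=> X; rewrite inE => /orP [/eqP ->|/H1 [h1 h2]]; first by split => //; lia.
  by split => //; apply: subset_trans h1 (subsetDl _ _).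
split.
  move=> x /=; rewrite H2 inE.
  case: (boolP (x \in S)) => xS /=; last by rewrite add0n.
  by rewrite (subsetP SA x xS).
move: H3; rewrite cardsDS //= => H3. lia.
Qed.

Lemma arith c w d p k : c * (p-1) <= w + (p-1) - 1 -> w <= d -> k <= d -> 2*k <= p -> 0 < k -> k * c <= d.
Proof.
case: c => [|[|c]] H1 H2 H3 H4 H5; try lia.
have E : p = k + (p - k) by lia.
move: H1; rewrite E; set m := p - k.
have : k <= m by lia.
nia.
Qed.
Section G.
Variables (T : finType) (e : rel T).
Hypothesis esy : symmetric e.
Hypothesis eirr : irreflexive e.

Definition cnt (s : seq {set T}) (g : {set T}) := count (fun X : {set T} => g \subset X) s.
Definition edgesV (V : {set T}) := [set g in edges e | g \subset V].
Definition degV (V : {set T}) v := #|[set g in edgesV V | v \in g]|.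
Definition NV (V : {set T}) v := [set u in V | e v u].
Definition conflict (f h : {set T}) := [exists x in f, exists y in h, (x == y) || e x y].

Lemma in_edges g : reflect (exists u v, e u v /\ g = [set u; v]) (g \in edges e).
Proof.
apply: (iffP imsetP) => [[x]|[u [v [euv ->]]]].
  by rewrite inE => exx ->; exists x.1, x.2.
by exists (u, v); rewrite ?inE.
Qed.

Lemma edge_card g : g \in edges e -> #|g| = 2.
Proof.
case/in_edges => u [v [euv ->]]; rewrite cards2.
by case: eqP euv => // ->; rewrite eirr.
Qed.

Lemma conflictC f h : conflict f h = conflict h f.
Proof.
apply/idP/idP => /exists_inP [x xf /exists_inP [y yh H]];
  apply/exists_inP; exists y => //; apply/exists_inP; exists x => //;
  by rewrite eq_sym esy.
Qed.

Lemma NV_deg (V : {set T}) (v : T) : v \in V -> #|NV V v| <= degV V v.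
Proof.
move=> vV.
rewrite -(@card_in_imset _ _ (fun u => [set v; u])); last first.
  move=> u1 u2; rewrite !inE => /andP [_ e1] /andP [_ e2] E.
  have : u1 \in [set v; u2] by rewrite -E !inE eqxx orbT.
  rewrite !inE => /orP [/eqP E1|/eqP //]. by move: e1; rewrite E1 eirr.
apply: subset_leq_card; apply/subsetP => g /imsetP [u]; rewrite !inE => /andP [uV evu] ->.
rewrite !inE eqxx /= andbT; apply/andP; split.
  by apply/in_edges; exists v, u.
by rewrite subUset !sub1set vV uV.
Qed.

Lemma edges_split (V : {set T}) (v : T) : #|edgesV V| = #|edgesV (V :\ v)| + degV V v.
Proof.
rewrite -(cardsID [set g : {set T} | v \in g] (edgesV V)) addnC; congr (_ + _).
  apply: eq_card => g; rewrite !inE subsetD1.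
  by case: (g \in edges e); case: (g \subset V); case: (v \in g).
apply: eq_card => g; rewrite !inE.
by case: (g \in edges e); case: (g \subset V); case: (v \in g).
Qed.


Lemma star (p : nat) (V W : {set T}) (v : T) : 2 <= p -> v \in V -> W \subset NV V v ->
  exists s1 : seq {set T}, (forall X, X \in s1 -> X \subset V /\ #|X| <= p) /\
   (forall u, u != v -> cnt s1 [set v; u] = (u \in W)) /\
   size s1 * (p - 1) <= #|W| + (p - 1) - 1.
Proof.
move=> p2 vV WN.
have [ss [H1 [H2 H3]]] := chunk W (q := p - 1) ltac:(lia).
exists (map (fun S => v |: S) ss); split; last split.
- move=> X /mapP [S /H1 [SW cS] ->]; split.
    rewrite subUset sub1set vV /=; apply: subset_trans SW (subset_trans WN _).
    by apply/subsetP => x; rewrite inE => /andP [].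
  rewrite cardsU1; case: (v \in S) => /=; lia.
- move=> u uv; rewrite /cnt count_map -H2; apply: eq_count => S /=.
  by rewrite subUset sub1set setU11 sub1set !inE (negbTE uv).
- by rewrite size_map.
Qed.

Definition cfree (M : {set {set T}}) :=
  [forall f in M, forall h in M, (f != h) ==> ~~ conflict f h].
Definition Dset (V : {set T}) (Dg : pred {set T}) := [set g in edgesV V | Dg g].

Lemma round_sub (M S : {set {set T}}) (g : {set T}) :
  M \subset edges e -> cfree M -> S \subset M -> g \in edges e ->
  (g \subset \bigcup_(h in S) h) = (g \in S).
Proof.
move=> ME cM SM gE; apply/idP/idP; last by move=> gS; apply: (bigcup_sup _ gS).
case/in_edges: (gE) => a [b [eab gab]].
rewrite gab subUset !sub1set => /andP [/bigcupP [h1 h1S ah1] /bigcupP [h2 h2S bh2]].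
have h12 : h1 = h2.
  apply/eqP; apply: contraT => ne.
  have := (forallP cM) h1; rewrite (subsetP SM _ h1S) /= => /forall_inP /(_ h2 (subsetP SM _ h2S)).
  rewrite ne /= => /negP []; apply/exists_inP; exists a => //; apply/exists_inP; exists b => //.
  by rewrite eab orbT.
subst h2.
have -> : [set a; b] = h1; last by [].
apply/eqP; rewrite eqEcard subUset !sub1set ah1 bh2 /= -gab.
by rewrite (edge_card gE) (edge_card (subsetP ME _ (subsetP SM _ h1S))).
Qed.

Lemma round_card (S : {set {set T}}) :
  S \subset edges e -> #|\bigcup_(h in S) h| <= 2 * #|S|.
Proof.
move=> SE; apply: leq_trans (card_bigcup_le _ _) _.
rewrite (eq_bigr (fun _ => 2)); first by rewrite sum_nat_const mulnC.
by move=> h hS; rewrite (edge_card (subsetP SE _ hS)).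
Qed.

Lemma phase2 (p k : nat) (V : {set T}) r : 0 < k -> 2 * k <= p ->
  forall Dg : pred {set T},
  (forall f, f \in Dset V Dg -> #|[set h in Dset V Dg | (h != f) && conflict f h]| < r) ->
  exists s : seq {set T}, (forall X, X \in s -> X \subset V /\ #|X| <= p) /\
    (forall g, g \in edgesV V -> odd (cnt s g) = Dg g) /\
    k * size s <= #|Dset V Dg| + k * r.
Proof.
move=> k0 kp; elim: r => [|r IH] Dg Hc.
  exists [::]; split => //; split; last by rewrite !muln0.
  move=> g gE /=.
  apply/esym/negP => Dgg.
  have : g \in Dset V Dg by rewrite inE gE Dgg.
  by move/Hc.
set D := Dset V Dg.
pose P := fun M : {set {set T}} => (M \subset D) && cfree M.
have P0 : P set0.
  by rewrite /P sub0set /=; apply/forall_inP => f; rewrite inE.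
have [M maxM _] := maxset_exists P0.
have /andP [MD cM] := maxsetp maxM.
have DE : D \subset edgesV V by apply/subsetP => g; rewrite inE => /andP [].
have EE : edgesV V \subset edges e by apply/subsetP => g; rewrite inE => /andP [].
have ME : M \subset edges e by apply: subset_trans MD (subset_trans DE EE).
have maxc : forall f, f \in D -> f \notin M -> exists2 h, h \in M & conflict f h.
  move=> f fD fM; apply/exists_inP; apply: contraT => nc.
  have Pf : P (f |: M).
    rewrite /P subUset sub1set fD MD /=.
    apply/forall_inP => a aM'; apply/forall_inP => b bM'; apply/implyP => ab.
    move: aM' bM'; rewrite !inE => /orP [/eqP af|aM] /orP [/eqP bf|bM].
    - by move: ab; rewrite af bf eqxx.
    - apply/negP => cab; move/negP: nc; apply; apply/exists_inP; exists b => //.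
      by rewrite -af.
    - apply/negP => cab; move/negP: nc; apply; apply/exists_inP; exists a => //.
      by rewrite conflictC -bf.
    - by have := (forallP cM) a; rewrite aM /= => /forall_inP /(_ b bM); rewrite ab.
  have := maxsetsup maxM Pf (subsetUr _ _) => E.
  by move: fM; rewrite -E setU11.
have [ss [H1 [H2 H3]]] := chunk M (q := k) k0.
pose D' := fun g => Dg g (+) (g \in M).
have DD' : Dset V D' = D :\: M.
  apply/setP => g; rewrite !inE /D'.
  case: (boolP (g \in M)) => gM /=.
    have := subsetP MD _ gM; rewrite inE => /andP [_ ->]; by rewrite andbF.
  by rewrite addbF.
have Hc' : forall f, f \in Dset V D' ->
    #|[set h in Dset V D' | (h != f) && conflict f h]| < r.
  move=> f; rewrite DD' inE => /andP [fM fD].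
  have [h hM cfh] := maxc f fD fM.
  have := Hc f fD; rewrite ltnS; apply: leq_trans; apply: proper_card.
  apply/properP; split.
    by apply/subsetP => x; rewrite !inE => /andP [/andP [_ ->] ->].
  exists h; last by rewrite !inE hM.
  have hD : h \in D := subsetP MD _ hM.
  rewrite inE hD cfh andbT /=; apply: contraNneq fM => <-; exact: hM.
have [s' [K1 [K2 K3]]] := IH D' Hc'.
exists (map (fun S : {set {set T}} => \bigcup_(h in S) h) ss ++ s'); split; last split.
- move=> X; rewrite mem_cat => /orP [/mapP [S /H1 [SM cS] ->]|/K1 //]; split.
    apply/bigcupsP => h hS.
    by have := subsetP DE _ (subsetP MD _ (subsetP SM _ hS)); rewrite inE => /andP [].
  apply: leq_trans (round_card (subset_trans SM ME)) _; lia.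
- move=> g gV; rewrite /cnt count_cat count_map.
  have -> : count (fun S : {set {set T}} => g \subset \bigcup_(h in S) h) ss = (g \in M).
    rewrite -H2; apply: eq_in_count => S /H1 [SM _] /=.
    exact: round_sub ME cM SM (subsetP EE _ gV).
  rewrite oddD oddb; have := K2 g gV; rewrite /cnt => ->; rewrite /D'.
  by case: (g \in M); case: (Dg g).
- rewrite size_cat size_map mulnDr.
  move: K3; rewrite DD' cardsDS // => K3.
  have := subset_leq_card MD; rewrite -/D.
  move: H3; rewrite mulnC; lia.
Qed.

Lemma conf_bound (k : nat) (V : {set T}) (Dg : pred {set T}) (f : {set T}) :
  (forall v, v \in V -> degV V v < k) -> f \in edgesV V ->
  #|[set h in Dset V Dg | (h != f) && conflict f h]| <= 2 * k * (k - 1).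
Proof.
move=> Hd; rewrite /edgesV inE => /andP [fE fV].
pose Z := \bigcup_(x in f) (x |: NV V x).
have ZV : Z \subset V.
  apply/bigcupsP => x xf; rewrite subUset sub1set (subsetP fV _ xf) /=.
  by apply/subsetP => y; rewrite inE => /andP [].
have cZ : #|Z| <= 2 * k.
  apply: leq_trans (card_bigcup_le _ _) _.
  apply: (@leq_trans (\sum_(x in f) k)).
    apply: leq_sum => x xf; rewrite cardsU1; have xV := subsetP fV _ xf.
    have := NV_deg xV; have := Hd x xV; case: (x \in NV V x) => /=; lia.
  by rewrite sum_nat_const (edge_card fE) mulnC.
have sub : [set h in Dset V Dg | (h != f) && conflict f h] \subset
           \bigcup_(y in Z) [set g in edgesV V | y \in g].
  apply/subsetP => h; rewrite /Dset /edgesV !inE.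
  move=> /andP [/andP [/andP [hE hV] Dh] /andP [_ /exists_inP [x xf /exists_inP [y yh H]]]].
  apply/bigcupP; exists y.
    apply/bigcupP; exists x => //; rewrite !inE (subsetP hV _ yh) /=.
    by move: H; rewrite eq_sym.
  by rewrite !inE hE hV yh.
apply: leq_trans (subset_leq_card sub) _; apply: leq_trans (card_bigcup_le _ _) _.
apply: (@leq_trans (\sum_(y in Z) (k - 1))).
  apply: leq_sum => y yZ; have := Hd y (subsetP ZV _ yZ); rewrite /degV; lia.
rewrite sum_nat_const; apply: leq_mul => //.
Qed.

Lemma phase2_full (p k : nat) (V : {set T}) : 0 < k -> 2 * k <= p ->
  (forall v, v \in V -> degV V v < k) ->
  forall Dg : pred {set T},
  exists s : seq {set T}, (forall X, X \in s -> X \subset V /\ #|X| <= p) /\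
    (forall g, g \in edgesV V -> odd (cnt s g) = Dg g) /\
    k * size s <= #|edgesV V| + k * (2 * k * (k - 1)).+1.
Proof.
move=> k0 kp Hd Dg.
have [s [H1 [H2 H3]]] := phase2 (V := V) (r := (2 * k * (k - 1)).+1) k0 kp (Dg := Dg)
  (fun f fD => conf_bound Dg Hd (f := f) ltac:(by move: fD; rewrite inE => /andP [])).
exists s; split => //; split => //.
apply: leq_trans H3 _; rewrite leq_add2r; apply: subset_leq_card.
by apply/subsetP => g; rewrite inE => /andP [].
Qed.

Lemma phase1 (p k : nat) n : 0 < k -> 2 * k <= p ->
  forall V : {set T}, #|V| <= n -> forall Dg : pred {set T},
  exists s : seq {set T}, (forall X, X \in s -> X \subset V /\ #|X| <= p) /\
    (forall g, g \in edgesV V -> odd (cnt s g) = Dg g) /\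
    k * size s <= #|edgesV V| + k * (2 * k * (k - 1)).+1.
Proof.
move=> k0 kp; elim: n => [|n IH] V HV Dg.
  apply: phase2_full => // v vV.
  have : 0 < #|V| by apply/card_gt0P; exists v.
  lia.
case: (boolP [exists v in V, k <= degV V v]) => [/exists_inP [v vV dv]|]; last first.
  move/exists_inPn => H; apply: phase2_full => // v vV; by rewrite ltnNge H.
pose W := [set u in NV V v | Dg [set v; u]].
have WN : W \subset NV V v by apply/subsetP => u; rewrite inE => /andP [].
have p2 : 2 <= p by lia.
have [s1 [A1 [A2 A3]]] := star p2 vV WN.
pose D' := fun g => Dg g (+) odd (cnt s1 g).
have cV : #|V :\ v| <= n by move: HV; rewrite (cardsD1 v V) vV; lia.
have [s2 [B1 [B2 B3]]] := IH (V :\ v) cV D'.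
exists (s1 ++ s2); split; last split.
- move=> X; rewrite mem_cat => /orP [/A1 //|/B1 [XV cX]]; split => //.
  by apply: subset_trans XV (subsetDl _ _).
- move=> g gV.
  have -> : cnt (s1 ++ s2) g = cnt s1 g + cnt s2 g by rewrite /cnt count_cat.
  move: (gV); rewrite /edgesV inE => /andP [gE gsV].
  case: (boolP (v \in g)) => vg.
    have [u [gu uv uV evu]] : exists u, [/\ g = [set v; u], u != v, u \in V & e v u].
      case/in_edges: gE => a [b [eab gab]].
      move: vg; rewrite gab !inE => /orP [/eqP va|/eqP vb].
        subst a; exists b; split => //.
          by apply: contraTneq eab => ->; rewrite eirr.
        by apply: (subsetP gsV); rewrite gab !inE eqxx orbT.
      subst b; exists a; split.
      - by rewrite setUC.
      - by apply: contraTneq eab => ->; rewrite eirr.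
      - by apply: (subsetP gsV); rewrite gab !inE eqxx.
      - by rewrite esy.
    have c2 : cnt s2 g = 0.
      rewrite /cnt; apply/eqP; rewrite -leqn0 leqNgt -has_count; apply/hasPn => X /B1 [XV _].
      apply/negP => gX; have := subsetP XV v (subsetP gX v vg); by rewrite !inE eqxx.
    rewrite c2 addn0 gu A2 // oddb !inE uV evu /=.
    by [].
  have gV' : g \in edgesV (V :\ v) by rewrite /edgesV inE gE subsetD1 gsV vg.
  rewrite oddD (B2 _ gV') /D'.
  by case: (odd (cnt s1 g)); case: (Dg g).
- rewrite size_cat mulnDr (edges_split V v).
  have := subset_leq_card WN; have := NV_deg vV.
  move: B3 A3; set c := size s1; set w := #|W|; set d := degV V v => B3 A3 h1 h2.
  have : k * c <= d by apply: (@arith c w d p k) => //; lia.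
  lia.
Qed.

End G.

Lemma final_arith m k p z : 0 < k -> 2 * k <= p ->
  k * z <= m + k * (2 * k * (k - 1)).+1 -> 2 * z <= 2 * ceildiv m k + p ^ 2.
Proof.
move=> k0 kp H.
have Hm : m <= ceildiv m k * k.
  rewrite /ceildiv; have := divn_eq (m + k - 1) k; have := ltn_pmod (m + k - 1) k0; lia.
have : k * z <= k * (ceildiv m k + (2 * k * (k - 1)).+1).
  rewrite mulnDr; apply: leq_trans H _; rewrite leq_add2r mulnC //.
rewrite leq_pmul2l // => Hz.
have : 2 * (2 * k * (k - 1)).+1 <= p ^ 2 by nia.
lia.
Qed.

Lemma apply_char (T : finType) (s : seq {set T}) (o : rel T) u v :
  apply_inversions s o u v =
  if odd (count (fun X : {set T} => (u \in X) && (v \in X)) s) then o v u else o u v.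
Proof.
elim: s o => [|X s IH] o //=.
rewrite IH /invert oddD.
case: (odd _); case: (u \in X); case: (v \in X) => //.
Qed.

Theorem theorem1p2 (T : finType) (e : rel T) (p : nat) :
  simple_graph e -> 2 <= p ->
  forall o1 o2 : rel T, orientation e o1 -> orientation e o2 ->
  exists s : seq {set T},
    le_p_inversion_seq p s o1 o2 /\
    2 * size s <= 2 * ceildiv #|edges e| p./2 + p ^ 2.
Proof.
move=> [esy eirr] p2 o1 o2 [O1a O1b] [O2a O2b].
set k := p./2.
have hk := odd_double_half p.
have k0 : 0 < k by rewrite -/k in hk; move: hk; rewrite -muln2; case: (odd p) => /=; lia.
have kp : 2 * k <= p by rewrite -/k in hk; move: hk; rewrite -muln2; case: (odd p) => /=; lia.
pose Dg := fun g : {set T} => [exists x : T * T,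
   (g == [set x.1; x.2]) && e x.1 x.2 && (o1 x.1 x.2 != o2 x.1 x.2)].
have [s [H1 [H2 H3]]] := phase1 esy eirr (n := #|[set: T]|) k0 kp (leqnn _) Dg.
exists s; split; last first.
  apply: final_arith => //; apply: leq_trans H3 _.
  have -> : edgesV e [set: T] = edges e.
    by apply/setP => g; rewrite inE subsetT andbT.
  by [].
split; first by apply/allP => X /H1 [].
move=> u v; rewrite apply_char.
have -> : count (fun X : {set T} => (u \in X) && (v \in X)) s = cnt s [set u; v].
  by apply: eq_count => X; rewrite /= subUset !sub1set.
case: (boolP (e u v)) => euv; last first.
  have n2 : o2 u v = false by apply/negP => /O2a; apply/negP.
  have n1 : o1 u v = false by apply/negP => /O1a; apply/negP.
  have n1' : o1 v u = false by apply/negP => /O1a; rewrite esy; apply/negP.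
  by rewrite n2 n1 n1'; case: (odd _).
have gE : [set u; v] \in edgesV e [set: T].
  by rewrite inE subsetT andbT; apply/in_edges; exists u, v.
have o1vu : o1 v u = ~~ o1 u v by move: (O1b u v euv); case: (o1 u v); case: (o1 v u).
have o2vu : o2 v u = ~~ o2 u v by move: (O2b u v euv); case: (o2 u v); case: (o2 v u).
have HD : Dg [set u; v] = (o1 u v != o2 u v).
  apply/existsP/idP => [[[x1 x2]] /= /andP [/andP [/eqP E ex] w]|w]; last first.
    by exists (u, v); rewrite /= eqxx euv w.
  have x1uv : x1 \in [set u; v] by rewrite E !inE eqxx.
  have x2uv : x2 \in [set u; v] by rewrite E !inE eqxx orbT.
  move: x1uv x2uv; rewrite !inE => /orP [/eqP e1|/eqP e1] /orP [/eqP e2|/eqP e2]; subst x1 x2.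
  - by rewrite eirr in ex.
  - by [].
  - by move: w; rewrite o1vu o2vu; case: (o1 u v); case: (o2 u v).
  - by rewrite eirr in ex.
rewrite (H2 _ gE) HD.
by move: o1vu; case: (o1 u v); case: (o2 u v) => /= E; rewrite ?E.
Qed.
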